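(* Let $\alpha$ be an involution of $Y$ which interchanges $E_1'\leftrightarrow R_3$, $E_2'\leftrightarrow R_1$, $E_3'\leftrightarrow R_2$ and permutes the six $A_2$-configurations $R_{i1}-R_{i2}$ in three orbits. Then the class of $\alpha(C_1')$ in $\mathrm{Pic}(Y)$ is either $C_1'$ or $-R_3-E_1'+3(E_3'+R_2)-C_1'$.
   Context: $Y$ is the minimal resolution of the quotient of the Cartwright–Steger surface $X$ by its automorphism group $\mathrm{Aut}(X)\cong\mathbb{Z}/3$; $Y$ is a simply connected minimal surface of general type with $K_Y^2=2$, $p_g=1$, $\mathrm{rk}\,\mathrm{Pic}(Y)=18$, so numerical and linear equivalence coincide on $Y$. $R_1,R_2,R_3$ are the three $(-3)$-curves of the resolution over the images of the fixed points of type $\frac13(1,1)$, $R_{j1}-R_{j2}$ ($j=1,\dots,6$) the $A_2$-chains of $(-2)$-curves over the images of the fixed points of type $\frac13(1,2)$, and $E_1',E_2',E_3',C_1',\dots,C_4'$ are the proper transforms of the images of certain totally geodesic curves. The $R_{lm}$ are disjoint from $E_i',R_j,C_k'$, and $\mathrm{Pic}(Y)\otimes\mathbb{Q}$ is spanned by $E_1',E_3',R_1,R_2,R_3,C_1'$ and the $R_{ij}$. The intersection matrix in the order $E_1',E_2',E_3',R_1,R_2,R_3,C_1'$ is $$\begin{pmatrix}-3&0&0&3&1&2&2\\0&-3&0&2&1&3&0\\0&0&-3&1&4&1&1\\3&2&1&-3&0&0&0\\1&1&4&0&-3&0&1\\2&3&1&0&0&-3&2\\2&0&1&0&1&2&-2\end{pmatrix}.$$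 $K_Y\equiv E_3'+R_2$ and $E_1'+E_2'+R_1+R_3\equiv 2E_3'+2R_2$. *)

(* Defs.v *)
From HB Require Import structures.
From mathcomp Require Import all_boot all_order all_algebra.
Set Implicit Arguments. Unset Strict Implicit. Unset Printing Implicit Defensive.
Import Order.TTheory GRing.Theory Num.Theory.
Local Open Scope ring_scope.

(* Intersection matrix in the order E1', E2', E3', R1, R2, R3, C1'. *)
Definition cs_rows : seq (seq int) :=
  [:: [:: -3; 0; 0; 3; 1; 2; 2];
      [:: 0; -3; 0; 2; 1; 3; 0];
      [:: 0; 0; -3; 1; 4; 1; 1];
      [:: 3; 2; 1; -3; 0; 0; 0];
      [:: 1; 1; 4; 0; -3; 0; 1];
      [:: 2; 3; 1; 0; 0; -3; 2];
      [:: 2; 0; 1; 0; 1; 2; -2]].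

Definition cs_mat : 'M[int]_7 :=
  \matrix_(i < 7, j < 7) nth 0 (nth [::] cs_rows i) j.

(* Intersection numbers of the six A_2 chains R_{i1} - R_{i2}
   (indices i : 'I_6, k : 'I_2). *)
Definition A2_int (i : 'I_6) (k : 'I_2) (j : 'I_6) (l : 'I_2) : int :=
  if i == j then (if k == l then -2 else 1) else 0.

(* Main.v *)
Require Import Defs.
From HB Require Import structures.
From mathcomp Require Import all_boot all_order all_algebra zify ring.
Import Order.TTheory GRing.Theory Num.Theory.
Local Open Scope ring_scope.


Section Bil.
Variables (V : zmodType) (b : V -> V -> int).
Hypothesis b_addl : forall x y z, b (x + y) z = b x z + b y z.
Lemma b0l y : b 0 y = 0.
Proof. have := b_addl 0 0 y; rewrite addr0; lia. Qed.
Lemma bNl x y : b (- x) y = - b x y.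
Proof. have := b_addl x (-x) y; rewrite subrr b0l; lia. Qed.
Lemma bBl x z y : b (x - z) y = b x y - b z y.
Proof. by rewrite b_addl bNl. Qed.
Lemma bMnl x y n : b (x *+ n) y = b x y * n%:Z.
Proof.
elim: n => [|n IH]; first by rewrite mulr0n b0l mulr0.
rewrite mulrS b_addl IH; lia.
Qed.
Lemma bMzl x y z : b (x *~ z) y = b x y * z.
Proof.
case: z => n; first by rewrite -pmulrn bMnl.
rewrite NegzE mulrNz bNl -pmulrn bMnl; lia.
Qed.
Lemma bsum (I : Type) (r : seq I) (P : pred I) (F : I -> V) y :
  b (\sum_(i <- r | P i) F i) y = \sum_(i <- r | P i) b (F i) y.
Proof.
apply: (big_morph (fun x => b x y)); [exact: (fun u v => b_addl u v y) | exact: b0l].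
Qed.
End Bil.

Lemma tstep (n c t: int) : 0 < n -> 3 * c = n - t * n -> -3 * n = c * (t - 1) -> t = -2 \/ t = 4.
Proof.
move=> hn h1 h2.
have e : n * ((t-4)*(t+2)) = (3*c - (n - t*n))*(t-1) - 3*(c*(t-1) - -3 * n) by ring.
rewrite h1 h2 !subrr mul0r subr0 in e.
move/eqP: e; rewrite mulf_eq0 (gt_eqF hn) /= mulf_eq0 => /orP[] /eqP; lia.
Qed.

Theorem lemma5p2
  (* Pic(Y), with the intersection form *)
  (V : zmodType) (b : V -> V -> int)
  (b_addl : forall x y z, b (x + y) z = b x z + b y z)
  (b_sym : forall x y, b x y = b y x)
  (* numerical and linear equivalence coincide *)
  (b_nondeg : forall x, (forall y, b x y = 0) -> x = 0)
  (E1 E2 E3 R1 R2 R3 C1 : V) (R : 'I_6 -> 'I_2 -> V)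
  (hmat : forall i j : 'I_7,
      b (tnth [tuple E1; E2; E3; R1; R2; R3; C1] i)
        (tnth [tuple E1; E2; E3; R1; R2; R3; C1] j) = cs_mat i j)
  (hA2 : forall i k j l, b (R i k) (R j l) = A2_int i k j l)
  (hdisj : forall i k, forall X, X \in [:: E1; E2; E3; R1; R2; R3; C1] ->
      b (R i k) X = 0)
  (hrel : E1 + E2 + R1 + R3 = (E3 + R2) *+ 2)
  (* Pic(Y) (x) Q is spanned by E1', E3', R1, R2, R3, C1' and the R_ij *)
  (hspan : forall x : V, exists (n : nat) (c : 'I_6 -> int) (d : 'I_6 -> 'I_2 -> int),
      (0 < n)%N /\
      x *+ n = E1 *~ c 0 + E3 *~ c 1 + R1 *~ c 2 + R2 *~ c 3 + R3 *~ c 4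
               + C1 *~ c 5 + \sum_(i < 6) \sum_(k < 2) R i k *~ d i k)
  (* alpha : the action of the involution on Pic(Y) *)
  (alpha : V -> V)
  (alpha_add : forall x y, alpha (x + y) = alpha x + alpha y)
  (alpha_invol : forall x, alpha (alpha x) = x)
  (alpha_isom : forall x y, b (alpha x) (alpha y) = b x y)
  (hE1 : alpha E1 = R3) (hE2 : alpha E2 = R1) (hE3 : alpha E3 = R2)
  (* alpha permutes the six A_2-configurations in three orbits *)
  (sigma : 'I_6 -> 'I_6)
  (sigma_invol : forall i, sigma (sigma i) = i)
  (sigma_nofix : forall i, sigma i != i)
  (hR : forall i, perm_eq [:: alpha (R i 0); alpha (R i 1)]
                          [:: R (sigma i) 0; R (sigma i) 1]) :
  alpha C1 = C1 \/ alpha C1 = - R3 - E1 + (E3 + R2) *+ 3 - C1.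

Proof.
have m_E1_E1 : b E1 E1 = (-3) by have h := hmat (@Ordinal 7 0 isT) (@Ordinal 7 0 isT); rewrite mxE in h; exact h.
have m_E1_E2 : b E1 E2 = 0 by have h := hmat (@Ordinal 7 0 isT) (@Ordinal 7 1 isT); rewrite mxE in h; exact h.
have m_E1_E3 : b E1 E3 = 0 by have h := hmat (@Ordinal 7 0 isT) (@Ordinal 7 2 isT); rewrite mxE in h; exact h.
have m_E1_R1 : b E1 R1 = 3 by have h := hmat (@Ordinal 7 0 isT) (@Ordinal 7 3 isT); rewrite mxE in h; exact h.
have m_E1_R2 : b E1 R2 = 1 by have h := hmat (@Ordinal 7 0 isT) (@Ordinal 7 4 isT); rewrite mxE in h; exact h.
have m_E1_R3 : b E1 R3 = 2 by have h := hmat (@Ordinal 7 0 isT) (@Ordinal 7 5 isT); rewrite mxE in h; exact h.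
have m_E1_C1 : b E1 C1 = 2 by have h := hmat (@Ordinal 7 0 isT) (@Ordinal 7 6 isT); rewrite mxE in h; exact h.
have m_E2_E1 : b E2 E1 = 0 by have h := hmat (@Ordinal 7 1 isT) (@Ordinal 7 0 isT); rewrite mxE in h; exact h.
have m_E2_E2 : b E2 E2 = (-3) by have h := hmat (@Ordinal 7 1 isT) (@Ordinal 7 1 isT); rewrite mxE in h; exact h.
have m_E2_E3 : b E2 E3 = 0 by have h := hmat (@Ordinal 7 1 isT) (@Ordinal 7 2 isT); rewrite mxE in h; exact h.
have m_E2_R1 : b E2 R1 = 2 by have h := hmat (@Ordinal 7 1 isT) (@Ordinal 7 3 isT); rewrite mxE in h; exact h.
have m_E2_R2 : b E2 R2 = 1 by have h := hmat (@Ordinal 7 1 isT) (@Ordinal 7 4 isT); rewrite mxE in h; exact h.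
have m_E2_R3 : b E2 R3 = 3 by have h := hmat (@Ordinal 7 1 isT) (@Ordinal 7 5 isT); rewrite mxE in h; exact h.
have m_E2_C1 : b E2 C1 = 0 by have h := hmat (@Ordinal 7 1 isT) (@Ordinal 7 6 isT); rewrite mxE in h; exact h.
have m_E3_E1 : b E3 E1 = 0 by have h := hmat (@Ordinal 7 2 isT) (@Ordinal 7 0 isT); rewrite mxE in h; exact h.
have m_E3_E2 : b E3 E2 = 0 by have h := hmat (@Ordinal 7 2 isT) (@Ordinal 7 1 isT); rewrite mxE in h; exact h.
have m_E3_E3 : b E3 E3 = (-3) by have h := hmat (@Ordinal 7 2 isT) (@Ordinal 7 2 isT); rewrite mxE in h; exact h.
have m_E3_R1 : b E3 R1 = 1 by have h := hmat (@Ordinal 7 2 isT) (@Ordinal 7 3 isT); rewrite mxE in h; exact h.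
have m_E3_R2 : b E3 R2 = 4 by have h := hmat (@Ordinal 7 2 isT) (@Ordinal 7 4 isT); rewrite mxE in h; exact h.
have m_E3_R3 : b E3 R3 = 1 by have h := hmat (@Ordinal 7 2 isT) (@Ordinal 7 5 isT); rewrite mxE in h; exact h.
have m_E3_C1 : b E3 C1 = 1 by have h := hmat (@Ordinal 7 2 isT) (@Ordinal 7 6 isT); rewrite mxE in h; exact h.
have m_R1_E1 : b R1 E1 = 3 by have h := hmat (@Ordinal 7 3 isT) (@Ordinal 7 0 isT); rewrite mxE in h; exact h.
have m_R1_E2 : b R1 E2 = 2 by have h := hmat (@Ordinal 7 3 isT) (@Ordinal 7 1 isT); rewrite mxE in h; exact h.
have m_R1_E3 : b R1 E3 = 1 by have h := hmat (@Ordinal 7 3 isT) (@Ordinal 7 2 isT); rewrite mxE in h; exact h.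
have m_R1_R1 : b R1 R1 = (-3) by have h := hmat (@Ordinal 7 3 isT) (@Ordinal 7 3 isT); rewrite mxE in h; exact h.
have m_R1_R2 : b R1 R2 = 0 by have h := hmat (@Ordinal 7 3 isT) (@Ordinal 7 4 isT); rewrite mxE in h; exact h.
have m_R1_R3 : b R1 R3 = 0 by have h := hmat (@Ordinal 7 3 isT) (@Ordinal 7 5 isT); rewrite mxE in h; exact h.
have m_R1_C1 : b R1 C1 = 0 by have h := hmat (@Ordinal 7 3 isT) (@Ordinal 7 6 isT); rewrite mxE in h; exact h.
have m_R2_E1 : b R2 E1 = 1 by have h := hmat (@Ordinal 7 4 isT) (@Ordinal 7 0 isT); rewrite mxE in h; exact h.
have m_R2_E2 : b R2 E2 = 1 by have h := hmat (@Ordinal 7 4 isT) (@Ordinal 7 1 isT); rewrite mxE in h; exact h.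
have m_R2_E3 : b R2 E3 = 4 by have h := hmat (@Ordinal 7 4 isT) (@Ordinal 7 2 isT); rewrite mxE in h; exact h.
have m_R2_R1 : b R2 R1 = 0 by have h := hmat (@Ordinal 7 4 isT) (@Ordinal 7 3 isT); rewrite mxE in h; exact h.
have m_R2_R2 : b R2 R2 = (-3) by have h := hmat (@Ordinal 7 4 isT) (@Ordinal 7 4 isT); rewrite mxE in h; exact h.
have m_R2_R3 : b R2 R3 = 0 by have h := hmat (@Ordinal 7 4 isT) (@Ordinal 7 5 isT); rewrite mxE in h; exact h.
have m_R2_C1 : b R2 C1 = 1 by have h := hmat (@Ordinal 7 4 isT) (@Ordinal 7 6 isT); rewrite mxE in h; exact h.
have m_R3_E1 : b R3 E1 = 2 by have h := hmat (@Ordinal 7 5 isT) (@Ordinal 7 0 isT); rewrite mxE in h; exact h.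
have m_R3_E2 : b R3 E2 = 3 by have h := hmat (@Ordinal 7 5 isT) (@Ordinal 7 1 isT); rewrite mxE in h; exact h.
have m_R3_E3 : b R3 E3 = 1 by have h := hmat (@Ordinal 7 5 isT) (@Ordinal 7 2 isT); rewrite mxE in h; exact h.
have m_R3_R1 : b R3 R1 = 0 by have h := hmat (@Ordinal 7 5 isT) (@Ordinal 7 3 isT); rewrite mxE in h; exact h.
have m_R3_R2 : b R3 R2 = 0 by have h := hmat (@Ordinal 7 5 isT) (@Ordinal 7 4 isT); rewrite mxE in h; exact h.
have m_R3_R3 : b R3 R3 = (-3) by have h := hmat (@Ordinal 7 5 isT) (@Ordinal 7 5 isT); rewrite mxE in h; exact h.
have m_R3_C1 : b R3 C1 = 2 by have h := hmat (@Ordinal 7 5 isT) (@Ordinal 7 6 isT); rewrite mxE in h; exact h.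
have m_C1_E1 : b C1 E1 = 2 by have h := hmat (@Ordinal 7 6 isT) (@Ordinal 7 0 isT); rewrite mxE in h; exact h.
have m_C1_E2 : b C1 E2 = 0 by have h := hmat (@Ordinal 7 6 isT) (@Ordinal 7 1 isT); rewrite mxE in h; exact h.
have m_C1_E3 : b C1 E3 = 1 by have h := hmat (@Ordinal 7 6 isT) (@Ordinal 7 2 isT); rewrite mxE in h; exact h.
have m_C1_R1 : b C1 R1 = 0 by have h := hmat (@Ordinal 7 6 isT) (@Ordinal 7 3 isT); rewrite mxE in h; exact h.
have m_C1_R2 : b C1 R2 = 1 by have h := hmat (@Ordinal 7 6 isT) (@Ordinal 7 4 isT); rewrite mxE in h; exact h.
have m_C1_R3 : b C1 R3 = 2 by have h := hmat (@Ordinal 7 6 isT) (@Ordinal 7 5 isT); rewrite mxE in h; exact h.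
have m_C1_C1 : b C1 C1 = (-2) by have h := hmat (@Ordinal 7 6 isT) (@Ordinal 7 6 isT); rewrite mxE in h; exact h.

have bB := @bBl V b b_addl. have bN := @bNl V b b_addl. have bMn := @bMnl V b b_addl.
have bMz := @bMzl V b b_addl. have bs := @bsum V b b_addl.
have bc : forall (n : nat) (c : 'I_6 -> int) (d : 'I_6 -> 'I_2 -> int) w y,
  w *+ n = E1 *~ c 0 + E3 *~ c 1 + R1 *~ c 2 + R2 *~ c 3 + R3 *~ c 4
               + C1 *~ c 5 + \sum_(i < 6) \sum_(k < 2) R i k *~ d i k ->
  b w y * n%:Z = b E1 y * c 0 + b E3 y * c 1 + b R1 y * c 2 + b R2 y * c 3 + b R3 y * c 4
    + b C1 y * c 5 + \sum_(i < 6) \sum_(k < 2) b (R i k) y * d i k.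
  move=> n c d w y e; rewrite -bMn e !b_addl !bMz bs.
  congr (_ + _); apply: eq_bigr => i _; rewrite bs; apply: eq_bigr => k _; exact: bMz.
have sum0 : forall (d : 'I_6 -> 'I_2 -> int) y, (forall i k, b (R i k) y = 0) ->
   \sum_(i < 6) \sum_(k < 2) b (R i k) y * d i k = 0.
  by move=> d y h; apply: big1 => i _; apply: big1 => k _; rewrite h mul0r.
have rE1 i k : b (R i k) E1 = 0 by rewrite hdisj // !inE eqxx ?orbT.
have rE2 i k : b (R i k) E2 = 0 by rewrite hdisj // !inE eqxx ?orbT.
have rE3 i k : b (R i k) E3 = 0 by rewrite hdisj // !inE eqxx ?orbT.
have rR1 i k : b (R i k) R1 = 0 by rewrite hdisj // !inE eqxx ?orbT.
have rR2 i k : b (R i k) R2 = 0 by rewrite hdisj // !inE eqxx ?orbT.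
have rR3 i k : b (R i k) R3 = 0 by rewrite hdisj // !inE eqxx ?orbT.
have rC1 i k : b (R i k) C1 = 0 by rewrite hdisj // !inE eqxx ?orbT.
have aR3 : alpha R3 = E1 by rewrite -hE1 alpha_invol.
have aR1 : alpha R1 = E2 by rewrite -hE2 alpha_invol.
have aR2 : alpha R2 = E3 by rewrite -hE3 alpha_invol.
have xE1 : b (alpha C1) E1 = 2 by rewrite -aR3 alpha_isom.
have xE2 : b (alpha C1) E2 = 0 by rewrite -aR1 alpha_isom.
have xE3 : b (alpha C1) E3 = 1 by rewrite -aR2 alpha_isom.
have xR1 : b (alpha C1) R1 = 0 by rewrite -hE2 alpha_isom.
have xR2 : b (alpha C1) R2 = 1 by rewrite -hE3 alpha_isom.
have xR3 : b (alpha C1) R3 = 2 by rewrite -hE1 alpha_isom.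
have xx : b (alpha C1) (alpha C1) = -2 by rewrite alpha_isom.
have xR : forall j l, b (alpha C1) (R j l) = 0.
  move=> j l; have := hR (sigma j); rewrite sigma_invol => /perm_mem pm.
  have : R j l \in [:: R j 0; R j 1].
    by case: l => -[|[|m]] // hl; rewrite !inE; [ rewrite (_ : Ordinal hl = 0) ?eqxx // | rewrite (_ : Ordinal hl = 1) ?eqxx ?orbT //]; apply/val_inj.
  rewrite -pm !inE => /orP[] /eqP ->; by rewrite alpha_isom b_sym hdisj // !inE eqxx ?orbT.
have kill : forall z, b z E1 = 0 -> b z E3 = 0 -> b z R1 = 0 -> b z R2 = 0 -> b z R3 = 0 ->
   b z C1 = 0 -> (forall i k, b z (R i k) = 0) -> z = 0.
  move=> z h1 h3 h4 h5 h6 h7 hRk; apply: b_nondeg => y.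
  have [m [c' [d' [hm hy]]]] := hspan y.
  have := bc _ _ _ _ z hy.
  rewrite sum0; last by move=> i k; rewrite b_sym hRk.
  rewrite (b_sym E1) (b_sym E3) (b_sym R1) (b_sym R2) (b_sym R3) (b_sym C1) h1 h3 h4 h5 h6 h7.
  rewrite b_sym; move/eqP; rewrite !mul0r ?add0r ?addr0 mulf_eq0 => /orP[/eqP //|].
  rewrite eqz_nat => /eqP hm0; by rewrite hm0 in hm.
have [n [c [d [hn hx]]]] := hspan (alpha C1).
have eq1 := bc _ _ _ _ E1 hx; have eq3 := bc _ _ _ _ E3 hx;
have eq4 := bc _ _ _ _ R1 hx; have eq5 := bc _ _ _ _ R2 hx;
have eq6 := bc _ _ _ _ R3 hx; have eq7 := bc _ _ _ _ C1 hx;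
have eqx := bc _ _ _ _ (alpha C1) hx.
rewrite sum0 in eq1; last by [].
rewrite sum0 in eq3; last by [].
rewrite sum0 in eq4; last by [].
rewrite sum0 in eq5; last by [].
rewrite sum0 in eq6; last by [].
rewrite sum0 in eq7; last by [].
rewrite sum0 in eqx; last by move=> i k; rewrite b_sym xR.
rewrite (b_sym E1 (alpha C1)) (b_sym E3 (alpha C1)) (b_sym R1 (alpha C1))
  (b_sym R2 (alpha C1)) (b_sym R3 (alpha C1)) (b_sym C1 (alpha C1)) in eqx.
set t := b (alpha C1) C1 in eq7 eqx.
rewrite ?m_E1_E1 ?m_E1_E3 ?m_E1_R1 ?m_E1_R2 ?m_E1_R3 ?m_E1_C1
        ?m_E3_E1 ?m_E3_E3 ?m_E3_R1 ?m_E3_R2 ?m_E3_R3 ?m_E3_C1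
        ?m_R1_E1 ?m_R1_E3 ?m_R1_R1 ?m_R1_R2 ?m_R1_R3 ?m_R1_C1
        ?m_R2_E1 ?m_R2_E3 ?m_R2_R1 ?m_R2_R2 ?m_R2_R3 ?m_R2_C1
        ?m_R3_E1 ?m_R3_E3 ?m_R3_R1 ?m_R3_R2 ?m_R3_R3 ?m_R3_C1
        ?m_C1_E1 ?m_C1_E3 ?m_C1_R1 ?m_C1_R2 ?m_C1_R3 ?m_C1_C1
        ?xE1 ?xE3 ?xR1 ?xR2 ?xR3 ?xx in eq1 eq3 eq4 eq5 eq6 eq7 eqx.
have hN : 0 < n%:Z by rewrite ltz_nat.
have h1 : 3 * c 5 = n%:Z - t * n%:Z by lia.
have h2 : -3 * n%:Z = c 5 * (t - 1) by lia.
have := @tstep _ _ _ hN h1 h2; rewrite /t => -[ht|ht].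
- left; apply/eqP; rewrite -subr_eq0; apply/eqP; apply: kill.
  + by rewrite bB xE1 m_C1_E1.
  + by rewrite bB xE3 m_C1_E3.
  + by rewrite bB xR1 m_C1_R1.
  + by rewrite bB xR2 m_C1_R2.
  + by rewrite bB xR3 m_C1_R3.
  + by rewrite bB ht m_C1_C1.
  + by move=> i k; rewrite bB xR (b_sym C1) rC1 subr0.
- right; apply/eqP; rewrite -subr_eq0; apply/eqP; apply: kill;
   rewrite ?bB ?b_addl ?bN ?bMn ?bB ?b_addl ?bN.
  + rewrite xE1 m_R3_E1 m_E1_E1 m_E3_E1 m_R2_E1 m_C1_E1; lia.
  + rewrite xE3 m_R3_E3 m_E1_E3 m_E3_E3 m_R2_E3 m_C1_E3; lia.
  + rewrite xR1 m_R3_R1 m_E1_R1 m_E3_R1 m_R2_R1 m_C1_R1; lia.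
  + rewrite xR2 m_R3_R2 m_E1_R2 m_E3_R2 m_R2_R2 m_C1_R2; lia.
  + rewrite xR3 m_R3_R3 m_E1_R3 m_E3_R3 m_R2_R3 m_C1_R3; lia.
  + rewrite ht m_R3_C1 m_E1_C1 m_E3_C1 m_R2_C1 m_C1_C1; lia.
  + move=> i k; rewrite ?bB ?b_addl ?bN ?bMn ?bB ?b_addl ?bN xR.
    rewrite !(b_sym _ (R i k)) rR3 rE1 rE3 rR2 rC1; lia.
Qed.
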